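(* There is no $(4,1,p)$-QRA coding with $p>1/2$. That is, there do not exist a real number $p>1/2$, one-qubit density operators $\rho_x$ (positive semidefinite $2\times 2$ complex matrices of trace $1$) for $x\in\{0,1\}^4$, and POVMs $\{E^i_0,E^i_1\}$ for $i\in\{1,2,3,4\}$ such that $\mathrm{Tr}(E^i_{x_i}\rho_x)\ge p$ for all $x\in\{0,1\}^4$ and all $i\in\{1,2,3,4\}$, where $x_i$ denotes the $i$-th bit of $x$.
   Context: An $(n,m,p)$-quantum random access (QRA) coding is a map assigning to each $n$-bit string $x\in\{0,1\}^n$ an $m$-qubit state $\rho_x$ (a positive semidefinite trace-one operator on $\mathbb{C}^{2^m}$) such that for every $i\in\{1,\dots,n\}$ there is a POVM $E^i=\{E^i_0,E^i_1\}$ (i.e. $E^i_0,E^i_1$ are positive semidefinite Hermitian operators on $\mathbb{C}^{2^m}$ with $E^i_0+E^i_1=I$) satisfying $\mathrm{Tr}(E^i_{x_i}\rho_x)\ge p$ for all $x\in\{0,1\}^n$, where $x_i$ is the $i$-th bit of $x$. *)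

(* Defs.v *)
From HB Require Import structures.
From mathcomp Require Import all_boot all_order all_algebra.
From mathcomp Require Import complex reals.
Set Implicit Arguments. Unset Strict Implicit. Unset Printing Implicit Defensive.
Import Order.TTheory GRing.Theory Num.Theory.
Local Open Scope ring_scope.

Definition adjmx (C : numClosedFieldType) (k l : nat) (A : 'M[C]_(k, l)) : 'M[C]_(l, k) :=
  (map_mx Num.conj A)^T.

Definition psd (C : numClosedFieldType) (d : nat) (A : 'M[C]_d) : Prop :=
  adjmx A = A /\ forall v : 'cV[C]_d, 0 <= (adjmx v *m A *m v) 0 0.

Definition density (C : numClosedFieldType) (d : nat) (rho : 'M[C]_d) : Prop :=
  psd rho /\ \tr rho = 1.

(* two-outcome POVM {E false, E true} (outcome 0 = false, 1 = true) *)
Definition povm2 (C : numClosedFieldType) (d : nat) (E : bool -> 'M[C]_d) : Prop :=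
  psd (E false) /\ psd (E true) /\ E false + E true = 1%:M.

Definition qra_coding (R : realType) (n m : nat) (p : R) : Prop :=
  exists (rho : {ffun 'I_n -> bool} -> 'M[R[i]]_(2 ^ m))
         (E : 'I_n -> bool -> 'M[R[i]]_(2 ^ m)),
    (forall x, density (rho x)) /\
    (forall i, povm2 (E i)) /\
    (forall (x : {ffun 'I_n -> bool}) (i : 'I_n),
        (p%:C)%C <= \tr (E i (x i) *m rho x)).

(* Main.v *)
Require Import Defs.
From HB Require Import structures.
From mathcomp Require Import all_boot all_order all_algebra.
From mathcomp Require Import complex reals.
From mathcomp Require Import lra.
Import Order.TTheory GRing.Theory Num.Theory.
Local Open Scope ring_scope.
Set Implicit Arguments. Unset Strict Implicit.

Section QRA.
Variable R : realType.
Local Notation C := R[i].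

Lemma sign1 (l s c : R) : 0 < c -> (0 < l -> c <= s) -> (~~ (0 < l) -> s <= - c) ->
  c * `|l| <= l * s.
Proof.
move=> hc h1 h2; case: (ltrP 0 l) => hl.
  by rewrite gtr0_norm //; have := h1 hl; nra.
have h : ~~ (0 < l) by rewrite -leNgt.
by rewrite ler0_norm //; have := h2 h; nra.
Qed.

Lemma sign2 (l s c : R) : 0 < c -> (l < 0 -> c <= s) -> (~~ (l < 0) -> s <= - c) ->
  l * s <= - (c * `|l|).
Proof.
move=> hc h1 h2; case: (ltrP l 0) => hl.
  by rewrite ltr0_norm //; have := h1 hl; nra.
have h : ~~ (l < 0) by rewrite -leNgt.
by rewrite ger0_norm //; have := h2 h; nra.
Qed.

Lemma ReD (x y : C) : complex.Re (x + y) = complex.Re x + complex.Re y.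
Proof. by case: x; case: y. Qed.
Lemma ImD (x y : C) : complex.Im (x + y) = complex.Im x + complex.Im y.
Proof. by case: x; case: y. Qed.
Lemma ReM (a : R) (z : C) : complex.Re ((a%:C)%C * z) = a * complex.Re z.
Proof. by case: z => x y /=; rewrite mul0r subr0. Qed.
Lemma ImM (a : R) (z : C) : complex.Im ((a%:C)%C * z) = a * complex.Im z.
Proof. by case: z => x y /=; rewrite mul0r addr0. Qed.

Lemma Re_sum (I : Type) (r : seq I) (P : pred I) (F : I -> C) :
  complex.Re (\sum_(i <- r | P i) F i) = \sum_(i <- r | P i) complex.Re (F i).
Proof. by apply: (big_morph _ ReD). Qed.
Lemma Im_sum (I : Type) (r : seq I) (P : pred I) (F : I -> C) :
  complex.Im (\sum_(i <- r | P i) F i) = \sum_(i <- r | P i) complex.Im (F i).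
Proof. by apply: (big_morph _ ImD). Qed.

Lemma ReJ (z : C) : complex.Re ((z^*)%C) = complex.Re z.
Proof. by case: z. Qed.
Lemma ImJ (z : C) : complex.Im ((z^*)%C) = - complex.Im z.
Proof. by case: z. Qed.

Lemma c_eq0 (z : C) : complex.Re z = 0 -> complex.Im z = 0 -> z = 0.
Proof. by case: z => x y /= -> ->. Qed.

Definition herm (A : 'M[C]_2) := forall k l, A l k = ((A k l)^*)%C.

Lemma ord2P (P : 'I_2 -> Prop) : P ord0 -> P ord_max -> forall k, P k.
Proof.
move=> h0 h1 [[|[|//]] Hk].
  by have -> : Ordinal Hk = ord0 by apply/val_inj.
by have -> : Ordinal Hk = ord_max by apply/val_inj.
Qed.

Lemma kernel (M : 'M[R]_(5, 4)) : exists v : 'rV[R]_5, v != 0 /\ v *m M = 0.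
Proof.
exists (nz_row (kermx M)); split.
  rewrite nz_row_eq0 -mxrank_eq0 mxrank_ker subn_eq0 -ltnNge.
  by apply: leq_ltn_trans (rank_leq_col M) _.
by apply/eqP; rewrite -sub_kermx nz_row_sub.
Qed.

Lemma herm_dep (H : 'I_5 -> 'M[C]_2) : (forall j, herm (H j)) ->
  exists v : 'rV[R]_5, v != 0 /\ \sum_j ((v 0 j)%:C)%C *: H j = 0.
Proof.
move=> hH.
pose M := \matrix_(j < 5, k < 4) nth 0 [:: complex.Re (H j ord0 ord0);
   complex.Re (H j ord0 ord_max); complex.Im (H j ord0 ord_max);
   complex.Re (H j ord_max ord_max)] k.
have [v [v0 vM]] := kernel M; exists v; split => //.
have w k (hk : (k < 4)%N) : \sum_j v 0 j * nth 0 [:: complex.Re (H j ord0 ord0);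
   complex.Re (H j ord0 ord_max); complex.Im (H j ord0 ord_max);
   complex.Re (H j ord_max ord_max)] k = 0.
  have /matrixP /(_ 0 (Ordinal hk)) := vM; rewrite !mxE => e; apply: etrans e.
  by apply: eq_bigr => j _; rewrite mxE.
have w0 := w 0%N isT; have w1 := w 1%N isT; have w2 := w 2%N isT; have w3 := w 3%N isT; simpl in w0, w1, w2, w3.
have ImD0 j k : complex.Im (H j k k) = 0.
  have := hH j k k; case: (H j k k) => a b [] /eqP; rewrite -subr_eq0 opprK.
  by rewrite -mulr2n mulrn_eq0 /= => /eqP.
apply/matrixP; apply: ord2P; apply: ord2P; rewrite summxE mxE;
  apply: c_eq0; rewrite ?Re_sum ?Im_sum.
- by under eq_bigr do rewrite mxE ReM.
- by under eq_bigr do rewrite mxE ImM ImD0 mulr0; rewrite big1.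
- by under eq_bigr do rewrite mxE ReM.
- by under eq_bigr do rewrite mxE ImM.
- by under eq_bigr do rewrite mxE ReM hH ReJ.
- under eq_bigr do rewrite mxE ImM hH ImJ mulrN.
  by rewrite sumrN w2 oppr0.
- by under eq_bigr do rewrite mxE ReM.
- by under eq_bigr do rewrite mxE ImM ImD0 mulr0; rewrite big1.
Qed.

Lemma conjE (z : C) : Num.conj z = (z^*)%C.
Proof. by case: z. Qed.

Lemma herm1 : herm (1%:M : 'M[C]_2).
Proof. by move=> k l; rewrite !mxE conjc_nat eq_sym. Qed.

Lemma herm_psd (A : 'M[C]_2) : psd A -> herm A.
Proof. move=> [hA _] k l; by rewrite -{1}hA !mxE conjE. Qed.

End QRA.

Theorem theorem1 (R : realType) (p : R) :
  1 / 2 < p -> ~ qra_coding 4 1 p.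
Proof.
move=> hp [rho [E [Hd [HE Hx]]]].
pose c := p - 1 / 2; have hc : 0 < c by rewrite /c subr_gt0.
pose H (j : 'I_5) : 'M[R[i]]_2 := if unlift ord0 j is Some i then E i true else 1%:M.
have hH j : herm (H j).
  rewrite /H; case: (unlift ord0 j) => [i|]; last exact: herm1.
  by case: (HE i) => _ [h _]; apply: herm_psd.
have [v [vn0 vB]] := herm_dep hH.
pose lam (i : 'I_4) : R := v 0 (lift ord0 i).
pose T x i := complex.Re (\tr (E i true *m rho x)).
have eqn x : v 0 ord0 + \sum_i lam i * T x i = 0.
  have := congr1 (fun B => complex.Re (\tr (B *m rho x))) vB.
  rewrite /= mul0mx mxtrace0 mulmx_suml (big_morph _ (@mxtraceD _ _) (mxtrace0 _ _)) Re_sum big_ord_recl => e.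
  rewrite -[0 in RHS](_ : complex.Re (0 : R[i]) = 0) // -e.
  congr (_ + _).
    rewrite /H unlift_none -scalemxAl mxtraceZ mul1mx (proj2 (Hd x)) ReM /=.
    by rewrite mulr1.
  apply: eq_bigr => i _; by rewrite /H liftK -scalemxAl mxtraceZ ReM.
have bnd (x : {ffun 'I_4 -> bool}) (i : 'I_4) : (x i -> c <= T x i - 1 / 2) /\ (~~ x i -> T x i - 1 / 2 <= - c).
  have h := Hx x i; rewrite lecE in h; case/andP: h => _ h.
  have hs : complex.Re (\tr (E i false *m rho x)) + T x i = 1.
    rewrite /T -ReD -mxtraceD -mulmxDl.
    by case: (HE i) => _ [_ ->]; rewrite mul1mx (proj2 (Hd x)).
  rewrite /c /T in hs *; case: (x i) h => /= h; split => // _; lra.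
pose xp := [ffun i => 0 < lam i]; pose xm := [ffun i => lam i < 0].
have hS1 : \sum_i c * `|lam i| <= \sum_i lam i * T xp i - \sum_i lam i * (1 / 2).
  rewrite -sumrB; apply: ler_sum => i _; rewrite -mulrBr.
  have [h1 h2] := bnd xp i; rewrite ffunE in h1 h2; exact: sign1.
have hS2 : \sum_i lam i * T xm i - \sum_i lam i * (1 / 2) <= - \sum_i c * `|lam i|.
  rewrite -sumrB -sumrN; apply: ler_sum => i _; rewrite -mulrBr.
  have [h1 h2] := bnd xm i; rewrite ffunE in h1 h2; exact: sign2.
have e1 := eqn xp; have e2 := eqn xm.
have hS0 : 0 <= \sum_i c * `|lam i| by apply: sumr_ge0 => i _; rewrite mulr_ge0 // ltW.
have hS : \sum_i c * `|lam i| = 0 by lra.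
have lam0 i : lam i = 0.
  have := psumr_eq0P (fun i _ => mulr_ge0 (ltW hc) (normr_ge0 (lam i))) hS (i := i) isT.
  by move/eqP; rewrite mulf_eq0 gt_eqF //= normr_eq0 => /eqP.
have v00 : v 0 ord0 = 0.
  by have := eqn xp; rewrite big1 ?addr0 // => i _; rewrite lam0 mul0r.
move/eqP: vn0; apply; apply/rowP => j; rewrite !mxE.
by case: (unliftP ord0 j) => [i ->|->]; [exact: lam0 | exact: v00].
Qed.
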